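(* For every integer $n\ge 2$, the graphs $Bar_n$, $B_{n-1}^c$ and $K_n\cup K_n$ (disjoint union of two copies of $K_n$) all have the same domination polynomial, namely $\big((1+x)^n-1\big)^2$. Consequently $\{Bar_n, B_{n-1}^c, K_n\cup K_n\}\subseteq [Bar_n]=[B_{n-1}^c]$; in particular $Bar_n$ is not $\mathcal{D}$-unique.
   Context: All graphs are finite and simple. For a graph $G$, a set $S\subseteq V(G)$ is dominating if every vertex of $V(G)\setminus S$ is adjacent to some vertex of $S$. Let $d(G,i)$ be the number of dominating sets of $G$ of cardinality $i$; the domination polynomial is $D(G,x)=\sum_{i=1}^{|V(G)|} d(G,i)x^i$. Two graphs are $\mathcal{D}$-equivalent if they have the same domination polynomial; $[G]$ denotes the set of (isomorphism classes of) graphs $\mathcal{D}$-equivalent to $G$, and $G$ is $\mathcal{D}$-unique if $[G]=\{G\}$. The $n$-barbell graph $Bar_n$ is obtained from two vertex-disjoint copies of $K_n$ by adding a single edge joining a vertex of one copy to a vertex of the other. The $m$-book graph $B_m$ has vertex set $\{u,v,a_1,\dots,a_m,b_1,\dots,b_m\}$ and edges $uv$ and $ua_i, a_ib_i, b_iv$ ($1\le i\le m$); $B_m^c$ denotes its complement. *)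

(* Defs.v *)
From HB Require Import structures.
From mathcomp Require Import all_boot all_order all_algebra.
Set Implicit Arguments. Unset Strict Implicit. Unset Printing Implicit Defensive.
Import Order.TTheory GRing.Theory Num.Theory.

Record sgraph := SGraph {
  vert : finType;
  adj : rel vert;
  adj_sym : symmetric adj;
  adj_irr : irreflexive adj
}.

Definition dominating (G : sgraph) (S : {set vert G}) : bool :=
  [forall v, (v \notin S) ==> [exists u in S, @adj G v u]].

Definition dom_count (G : sgraph) (i : nat) : nat :=
  #|[set S : {set vert G} | dominating S && (#|S| == i)]|.

Definition dom_poly (G : sgraph) : {poly int} :=
  (\sum_(1 <= i < #|vert G|.+1) (dom_count G i)%:R *: 'X^i)%R.

Definition D_equiv (G H : sgraph) : Prop := dom_poly G = dom_poly H.

Definition isomorphic (G H : sgraph) : Prop :=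
  exists f : vert G -> vert H, bijective f /\
    forall x y, @adj H (f x) (f y) = @adj G x y.

Definition D_unique (G : sgraph) : Prop :=
  forall H : sgraph, D_equiv H G -> isomorphic H G.

Definition KK_adj (n : nat) : rel ('I_n + 'I_n)%type :=
  fun x y => match x, y with
             | inl i, inl j => i != j
             | inr i, inr j => i != j
             | _, _ => false
             end.

Lemma KK_sym (n : nat) : symmetric (@KK_adj n).
Proof. by case=> i [] j //=; rewrite eq_sym. Qed.
Lemma KK_irr (n : nat) : irreflexive (@KK_adj n).
Proof. by case=> i /=; rewrite eqxx. Qed.

Definition KK (n : nat) : sgraph := SGraph (@KK_sym n) (@KK_irr n).

Definition bar_adj (n : nat) : rel ('I_n + 'I_n)%type :=
  fun x y => match x, y with
             | inl i, inl j => i != j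
             | inr i, inr j => i != j
             | inl i, inr j => (val i == 0) && (val j == 0)
             | inr i, inl j => (val i == 0) && (val j == 0)
             end.

Lemma bar_sym (n : nat) : symmetric (@bar_adj n).
Proof. by case=> i [] j //=; rewrite 1?eq_sym // andbC. Qed.
Lemma bar_irr (n : nat) : irreflexive (@bar_adj n).
Proof. by case=> i /=; rewrite eqxx. Qed.

Definition Bar (n : nat) : sgraph := SGraph (@bar_sym n) (@bar_irr n).

(* ---------- Book graph B_m and its complement ----------
   Vertices: inl false = u, inl true = v,
             inr (i, false) = a_i, inr (i, true) = b_i.
   Edges: uv, u a_i, a_i b_i, b_i v. *)
Definition book_adj (m : nat) : rel (bool + ('I_m * bool))%type :=
  fun x y => match x, y with
             | inl p, inl q => p != q
             | inl p, inr (i, b) => p == b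
             | inr (i, b), inl p => p == b
             | inr (i, b), inr (j, c) => (i == j) && (b != c)
             end.

Lemma book_sym (m : nat) : symmetric (@book_adj m).
Proof.
case=> [p|[i b]] [q|[j c]] /=.
- by rewrite eq_sym.
- by rewrite eq_sym.
- by rewrite eq_sym.
- by rewrite [j == i]eq_sym [c == b]eq_sym.
Qed.
Lemma book_irr (m : nat) : irreflexive (@book_adj m).
Proof. by case=> [p|[i b]] /=; rewrite !eqxx. Qed.

Definition Book (m : nat) : sgraph := SGraph (@book_sym m) (@book_irr m).

Definition compl_adj (G : sgraph) : rel (vert G) :=
  fun x y => (x != y) && ~~ @adj G x y.

Lemma compl_sym (G : sgraph) : symmetric (@compl_adj G).
Proof. by move=> x y; rewrite /compl_adj eq_sym (@adj_sym G). Qed.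
Lemma compl_irr (G : sgraph) : irreflexive (@compl_adj G).
Proof. by move=> x; rewrite /compl_adj eqxx. Qed.

Definition compl (G : sgraph) : sgraph := SGraph (@compl_sym G) (@compl_irr G).

(* Main.v *)
Require Import Defs.
From HB Require Import structures.
From mathcomp Require Import all_boot all_order all_algebra.
From mathcomp Require Import zify ring.
Import GRing.Theory.
Set Implicit Arguments. Unset Strict Implicit. Unset Printing Implicit Defensive.

Lemma coef_1X (m i : nat) : (((1 + 'X) ^+ m : {poly int})`_i = ('C(m, i))%:R)%R.
Proof.
rewrite addrC exprD1n coef_sum.
under eq_bigr do rewrite coefMn coefXn.
case: (ltnP i m.+1) => him.
  rewrite (bigD1 (Ordinal him)) //= eqxx big1 ?addr0 //.
  by move=> j /negbTE hj; rewrite eq_sym -(inj_eq val_inj) /= in hj; rewrite hj mul0rn.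
rewrite big1 ?bin_small //.
move=> j _; have : i != j by rewrite neq_ltn (leq_trans (ltn_ord j) him) orbT.
by move/negbTE ->; rewrite mul0rn.
Qed.

Lemma coef_dom (G : sgraph) i : 0 < i ->
  ((dom_poly G)`_i = (dom_count G i)%:R)%R.
Proof.
move=> i0; rewrite /dom_poly coef_sum.
under eq_bigr do rewrite coefZ coefXn.
case: (ltnP i #|vert G|.+1) => hi.
  rewrite (bigD1_seq i) ?mem_index_iota ?i0 ?iota_uniq //= eqxx mulr1 big1_seq ?addr0 //.
  by move=> j /andP[hj _]; rewrite eq_sym (negbTE hj) mulr0.
rewrite big1_seq.
  suff -> : dom_count G i = 0 by [].
  apply/eqP; rewrite cards_eq0; apply/eqP/setP => S; rewrite !inE.
  have h : #|S| <= #|vert G| := max_card _; apply/negbTE/nandP; right; apply/eqP => e.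
  by move: h hi; rewrite e => a b; rewrite ltnNge a in b.
move=> j /andP[_]; rewrite mem_index_iota => /andP[_ hj].
have : i != j by rewrite neq_ltn (leq_trans hj hi) orbT.
by move/negbTE ->; rewrite mulr0.
Qed.

Lemma dom_char (G : sgraph) (P : {set vert G}) :
  (forall x y, x != y -> (x \in P) = (y \in P) -> @adj G x y) ->
  (exists2 w, w \notin P & forall z, z \in P -> ~~ @adj G w z) ->
  (exists2 w, w \in P & forall z, z \notin P -> ~~ @adj G w z) ->
  forall S, dominating S = ~~ (S \subset P) && ~~ (S \subset ~:P).
Proof.
move=> hsame hw1 hw2 S; apply/idP/idP.
- move/forallP => hd; apply/andP; split; apply/negP => hS.
  + case: hw1 => w wP hw.
    have wS : w \notin S by apply: (contra (fun h => subsetP hS w h) wP).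
    move: (hd w); rewrite wS /= => /existsP [u /andP[uS wu]].
    by move: (hw u (subsetP hS u uS)); rewrite wu.
  + case: hw2 => w wP hw.
    have wS : w \notin S.
      apply/negP => h; move: (subsetP hS w h); by rewrite in_setC wP.
    move: (hd w); rewrite wS /= => /existsP [u /andP[uS wu]].
    have : u \notin P by rewrite -in_setC (subsetP hS u uS).
    by move/hw; rewrite wu.
- move=> /andP[/subsetPn [x xS xP] /subsetPn [y yS yP]].
  apply/forallP => w; apply/implyP => wS; apply/existsP.
  case: (boolP (w \in P)) => wP.
    exists y; rewrite yS /=; apply: hsame.
      by apply/eqP => e; rewrite e yS in wS.
    by move: yP; rewrite in_setC negbK wP.
  exists x; rewrite xS /=; apply: hsame.
    by apply/eqP => e; rewrite e xS in wS.
  by rewrite (negbTE wP) (negbTE xP).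
Qed.

Lemma count_split (T : finType) (P : {set T}) (D : pred {set T}) i n :
  0 < i -> #|P| = n -> #|~:P| = n ->
  (forall S, D S = ~~ (S \subset P) && ~~ (S \subset ~:P)) ->
  #|[set S | D S && (#|S| == i)]| + 'C(n, i) + 'C(n, i) = 'C(n + n, i).
Proof.
move=> i0 hP hC hD.
set E := [set S : {set T} | #|S| == i].
set A1 := [set S : {set T} | S \subset P & #|S| == i].
set A2 := [set S : {set T} | S \subset ~:P & #|S| == i].
have eD : [set S | D S && (#|S| == i)] = E :\: (A1 :|: A2).
  apply/setP => S; rewrite !inE hD.
  by case: (#|S| == i); case: (S \subset P); case: (S \subset ~:P).
have eI : E :&: (A1 :|: A2) = A1 :|: A2.
  by apply/setIidPr/subsetP => S; rewrite !inE => /orP[] /andP[_ ->].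
have e0 : A1 :&: A2 = set0.
  apply/setP => S; rewrite !inE; apply/negbTE/negP => /andP[/andP[h1 hi1] /andP[h2 _]].
  have : S \subset P :&: ~:P by rewrite subsetI h1 h2.
  rewrite setICr subset0 => /eqP Se.
  by move: hi1; rewrite Se cards0 => /eqP ei; rewrite -ei in i0.
have h1 := cardsID (A1 :|: A2) E; rewrite eI -eD in h1.
have h2 := cardsUI A1 A2; rewrite e0 cards0 addn0 /A1 /A2 !cards_draws hP hC in h2.
have h3 := card_draws T i; rewrite -(cardsC P) hP hC in h3.
rewrite -/E in h3; rewrite -/A1 -/A2 in h2; lia.
Qed.

Lemma coef_dom0 (G : sgraph) : ((dom_poly G)`_0 = 0)%R.
Proof.
rewrite /dom_poly coef_sum big1_seq // => j /andP[_].
by rewrite mem_index_iota coefZ coefXn => /andP[hj _]; rewrite eq_sym eqn0Ngt hj mulr0.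
Qed.

Lemma dom_poly_split (G : sgraph) (P : {set vert G}) n :
  #|P| = n -> #|~:P| = n ->
  (forall S, dominating S = ~~ (S \subset P) && ~~ (S \subset ~:P)) ->
  dom_poly G = (((1 + 'X) ^+ n - 1) ^+ 2)%R.
Proof.
move=> hP hC hD; apply/polyP => i.
have -> : (((1 + 'X) ^+ n - 1) ^+ 2 = (1 + 'X) ^+ (n + n) - (1 + 'X) ^+ n *+ 2 + 1 :> {poly int})%R.
  by rewrite exprD; ring.
rewrite coefD coefB coefMn !coef_1X coef1.
case: i => [|i].
  by rewrite coef_dom0 !bin0 /=; ring.
rewrite coef_dom //= -(count_split (D := @dominating G) _ hP hC hD) // !natrD; ring.
Qed.

Definition isl (n : nat) (x : ('I_n + 'I_n)%type) : bool :=
  if x is inl _ then true else false.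
Definition PL (n : nat) : {set ('I_n + 'I_n)} := [set x | isl x].

Lemma PL_card (n : nat) : #|PL n| = n /\ #|~: PL n| = n.
Proof.
have e : PL n = [set inl i | i in [set: 'I_n]].
  apply/setP => -[i|i]; rewrite !inE /=.
    by apply/esym/imsetP; exists i; rewrite ?inE.
  by apply/esym/negbTE/negP => /imsetP [j _].
have h : #|PL n| = n.
  rewrite e card_imset ?cardsT ?card_ord //.
  by move=> a b [].
split => //; have := cardsC (PL n); rewrite card_sum card_ord h; lia.
Qed.

Lemma Bar_dom (n : nat) (hn : 1 < n) (S : {set vert (Bar n)}) :
  dominating S = ~~ (S \subset PL n) && ~~ (S \subset ~: PL n).
Proof.
have h0 : 0 < n by apply: ltnW.
apply: dom_char.
- move=> [i|i] [j|j]; rewrite !inE //= => neq _.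
- exists (inr (Ordinal hn)); first by rewrite inE.
  by move=> [k|k]; rewrite inE.
- exists (inl (Ordinal hn)); first by rewrite inE.
  by move=> [k|k]; rewrite inE.
Qed.

Lemma KK_dom (n : nat) (hn : 1 < n) (S : {set vert (KK n)}) :
  dominating S = ~~ (S \subset PL n) && ~~ (S \subset ~: PL n).
Proof.
apply: dom_char.
- by move=> [i|i] [j|j]; rewrite !inE //= => neq _.
- exists (inr (Ordinal hn)); first by rewrite inE.
  by move=> [k|k]; rewrite inE.
- exists (inl (Ordinal hn)); first by rewrite inE.
  by move=> [k|k]; rewrite inE.
Qed.

Definition sideB (m : nat) (x : (bool + ('I_m * bool))%type) : bool :=
  match x with inl p => ~~ p | inr (_, b) => b end.
Definition PB (m : nat) : {set (bool + ('I_m * bool))} := [set x | sideB x].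
Definition flipB (m : nat) (x : (bool + ('I_m * bool))%type) : (bool + ('I_m * bool))%type :=
  match x with inl p => inl (~~ p) | inr (i, b) => inr (i, ~~ b) end.

Lemma flipBK (m : nat) : involutive (@flipB m).
Proof. by move=> [p|[i b]] /=; rewrite negbK. Qed.

Lemma PB_card (m : nat) : #|PB m| = m.+1 /\ #|~: PB m| = m.+1.
Proof.
have e : ~: PB m = [set flipB x | x in PB m].
  apply/setP => x; rewrite !inE; apply/idP/imsetP.
    move=> hx; exists (flipB x); last by rewrite flipBK.
    by move: hx; case: x => [p|[i b]]; rewrite !inE /= ?negbK.
  by move=> [y]; rewrite inE => hy ->; move: hy; case: y => [p|[i b]] /=; rewrite ?negbK.
have hc : #|~: PB m| = #|PB m|.
  by rewrite e card_imset //; apply: (can_inj (@flipBK m)).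
have := cardsC (PB m); rewrite hc card_sum card_prod card_bool card_ord => h.
split; lia.
Qed.

Lemma Book_dom (m : nat) (S : {set vert (compl (Book m))}) :
  dominating S = ~~ (S \subset PB m) && ~~ (S \subset ~: PB m).
Proof.
apply: dom_char.
- move=> x y neq; rewrite /= /compl_adj neq /=; move: neq.
  case: x => [p|[i b]]; case: y => [q|[j c]]; rewrite !inE /=.
  + by case: p; case: q.
  + by case: p; case: c.
  + by case: b; case: q.
  + by move=> _ ->; rewrite eqxx andbF.
- exists (inl true); first by rewrite inE.
  by move=> [[]|[i []]]; rewrite inE //= /compl_adj /= ?andbF.
- exists (inl false); first by rewrite inE.
  by move=> [[]|[i []]]; rewrite inE //= /compl_adj /= ?andbF.
Qed.

Lemma KK_side (n : nat) (x y : 'I_n + 'I_n) : KK_adj x y -> isl x = isl y.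
Proof. by case: x => i; case: y => j. Qed.

Lemma KK_same (n : nat) (x y : 'I_n + 'I_n) : x != y -> isl x = isl y -> KK_adj x y.
Proof. by case: x => i; case: y => j. Qed.

Lemma not_iso (n : nat) (hn : 1 < n) : ~ isomorphic (KK n) (Bar n).
Proof.
have h0 : 0 < n by apply: ltnW.
move=> [f [[g fK gK] hf]].
pose a : 'I_n + 'I_n := inl (Ordinal h0).
pose b : 'I_n + 'I_n := inr (Ordinal h0).
pose c : 'I_n + 'I_n := inl (Ordinal hn).
have e x y : KK_adj (g x) (g y) = bar_adj x y.
  by have := hf (g x) (g y); rewrite !gK /= => ->.
have hab : KK_adj (g a) (g b) by rewrite e.
have hac : KK_adj (g a) (g c) by rewrite e.
have : KK_adj (g b) (g c).
  apply: KK_same; last by rewrite -(KK_side hab) (KK_side hac).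
  by apply/negP => /eqP /(f_equal f); rewrite !gK.
by rewrite e.
Qed.

Theorem mainTheorem4 (n : nat) (hn : 2 <= n) :
  let target : {poly int} := (((1 + 'X) ^+ n - 1) ^+ 2)%R in
  [/\ [/\ dom_poly (Bar n) = target,
          dom_poly (compl (Book n.-1)) = target
        & dom_poly (KK n) = target],
      (D_equiv (Bar n) (Bar n) /\ D_equiv (compl (Book n.-1)) (Bar n)
        /\ D_equiv (KK n) (Bar n)),
      (forall H : sgraph, D_equiv H (Bar n) <-> D_equiv H (compl (Book n.-1)))
    & ~ D_unique (Bar n)].
Proof.
move=> target.
have [hP hC] := PL_card n.
have hB : dom_poly (Bar n) = target.
  exact: (@dom_poly_split (Bar n) (PL n) n hP hC (Bar_dom hn)).
have hK : dom_poly (KK n) = target.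
  exact: (@dom_poly_split (KK n) (PL n) n hP hC (KK_dom hn)).
have hBk : dom_poly (compl (Book n.-1)) = target.
  have [hP' hC'] := PB_card n.-1.
  have en : n.-1.+1 = n by rewrite prednK // ltnW.
  rewrite en in hP' hC'.
  exact: (@dom_poly_split (compl (Book n.-1)) (PB n.-1) n hP' hC' (@Book_dom n.-1)).
split => //.
- by rewrite /D_equiv hB hBk hK.
- by move=> H; rewrite /D_equiv hB hBk.
- move=> hU; apply: (not_iso hn); apply: hU.
  by rewrite /D_equiv hK hB.
Qed.
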